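(* Let $T_1,T_2$ be tables joined on column $J$, with frequencies $a_v$ and $b_v$ for $v\in\mathcal U$. Let $0<p_1,q_1,p_2,q_2\le 1$, let $S_1=\mathrm{UBS}_{p_1,q_1}(T_1,J)$ and $S_2=\mathrm{UBS}_{p_2,q_2}(T_2,J)$ be produced with a common hash function $h$, let $p=\min\{p_1,p_2\}$, and let $\hat J_{\mathrm{count}} = \frac{1}{p\,q_1q_2}|S_1\bowtie_J S_2|$. Then $$\mathrm{Var}(\hat J_{\mathrm{count}}) = \frac{1-p}{p}\gamma_{2,2} + \frac{1-q_2}{p q_2}\gamma_{2,1} + \frac{1-q_1}{p q_1}\gamma_{1,2} + \frac{(1-q_1)(1-q_2)}{p q_1 q_2}\gamma_{1,1},$$ where $\gamma_{i,j}=\sum_{v\in\mathcal U} a_v^i b_v^j$.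
   Context: $T_1,T_2$ are finite multisets of tuples, each having a join attribute $J$ taking values in a finite set $\mathcal U$; $a_v$ (resp. $b_v$) is the number of tuples of $T_1$ (resp. $T_2$) whose $J$-value is $v$. $S_1\bowtie_J S_2$ is the set of pairs $(t_1,t_2)\in S_1\times S_2$ with $t_1.J=t_2.J$. Universe-Bernoulli sampling $\mathrm{UBS}_{p,q}(T,J)$: given a hash function $h:\mathcal U\to[0,1]$, each tuple $t\in T$ with $h(t.J)<p$ is included in the sample independently with probability $q$; all other tuples are excluded. The hash function is perfect: the values $h(v)$, $v\in\mathcal U$, are independent and uniform on $[0,1]$; the same $h$ is used for both tables; the Bernoulli inclusion coins are independent across all tuples of both tables and independent of $h$. *)

(* Defs.v *)
From HB Require Import structures.
From mathcomp Require Import all_boot all_order all_algebra.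
From mathcomp Require Import all_classical all_reals all_analysis.
Set Implicit Arguments. Unset Strict Implicit. Unset Printing Implicit Defensive.
Import Order.TTheory GRing.Theory Num.Theory.
Local Open Scope ring_scope.
Local Open Scope classical_set_scope.

(* A table is modelled by a finite type of tuple identities [I] (so that a
   multiset of tuples is allowed) together with the join-attribute map
   [j : I -> U]. *)

Definition freq (U I : finType) (j : I -> U) (v : U) : nat :=
  #|[set i : I | j i == v]|.

Definition gamma (R : realType) (U I1 I2 : finType) (j1 : I1 -> U) (j2 : I2 -> U)
  (k l : nat) : R :=
  \sum_(v : U) ((freq j1 v)%:R ^+ k * (freq j2 v)%:R ^+ l).

Definition upd (U : eqType) (R : Type) (h : U -> R) (v : U) (x : R) : U -> R :=
  fun w => if w == v then x else h w.

(* Iterated integration of the hash values h(v), v in s, each against the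
   uniform (Lebesgue) distribution on [0,1]: this is the expectation with
   respect to independent uniform h(v). *)
Fixpoint iter_unif (R : realType) (U : eqType) (s : seq U)
    (F : (U -> R) -> R) (h : U -> R) : R :=
  match s with
  | [::] => F h
  | v :: s' => Rintegral (@lebesgue_measure R) `[0%R, 1%R]
                 (fun x => iter_unif s' F (upd h v x))
  end.

Definition Ehash (R : realType) (U : finType) (F : (U -> R) -> R) : R :=
  iter_unif (enum U) F (fun _ => 0).

Definition Ecoin (R : realType) (I : finType) (q : R)
    (G : {ffun I -> bool} -> R) : R :=
  \sum_(c : {ffun I -> bool}) ((\prod_(i : I) (if c i then q else 1 - q)) * G c).

Definition ubs (R : realType) (U I : finType) (j : I -> U) (p : R)
    (h : U -> R) (c : {ffun I -> bool}) : {set I} :=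
  [set i : I | (h (j i) < p) && c i].

Definition join_size (U I1 I2 : finType) (j1 : I1 -> U) (j2 : I2 -> U)
    (S1 : {set I1}) (S2 : {set I2}) : nat :=
  #|[set x : I1 * I2 | [&& x.1 \in S1, x.2 \in S2 & j1 x.1 == j2 x.2]]|.

Definition Expect (R : realType) (U I1 I2 : finType) (q1 q2 : R)
    (X : (U -> R) -> {ffun I1 -> bool} -> {ffun I2 -> bool} -> R) : R :=
  Ehash (fun h => Ecoin q1 (fun c1 => Ecoin q2 (fun c2 => X h c1 c2))).

Definition Var (R : realType) (U I1 I2 : finType) (q1 q2 : R)
    (X : (U -> R) -> {ffun I1 -> bool} -> {ffun I2 -> bool} -> R) : R :=
  Expect q1 q2 (fun h c1 c2 => (X h c1 c2) ^+ 2) - (Expect q1 q2 X) ^+ 2.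

Definition Jcount (R : realType) (U I1 I2 : finType) (j1 : I1 -> U) (j2 : I2 -> U)
    (p1 q1 p2 q2 : R) (h : U -> R) (c1 : {ffun I1 -> bool}) (c2 : {ffun I2 -> bool}) : R :=
  (join_size j1 j2 (ubs j1 p1 h c1) (ubs j2 p2 h c2))%:R
    / (Num.min p1 p2 * q1 * q2).

(* Main.v *)
Require Import Defs.
From HB Require Import structures.
From mathcomp Require Import all_boot all_order all_algebra.
From mathcomp Require Import all_classical all_reals all_analysis.
From mathcomp Require Import measurable_realfun lebesgue_integral_nonneg.
From mathcomp Require Import ring lra.
Set Implicit Arguments. Unset Strict Implicit. Unset Printing Implicit Defensive.
Import Order.TTheory GRing.Theory Num.Theory.
Import numFieldNormedType.Exports.
Local Open Scope ring_scope.

Section Coin.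
Variable R : realType.

Lemma Ecoin_ext (I : finType) (q : R) (G H : {ffun I -> bool} -> R) :
  (forall c, G c = H c) -> Ecoin q G = Ecoin q H.
Proof. by move=> e; apply: eq_bigr => c _; rewrite e. Qed.

Lemma Ecoin_sum (I K : finType) (q : R) (F : K -> {ffun I -> bool} -> R) :
  Ecoin q (fun c => \sum_k F k c) = \sum_k Ecoin q (F k).
Proof.
rewrite /Ecoin; under eq_bigr do rewrite mulr_sumr.
exact: exchange_big.
Qed.

Lemma Ecoin_mull (I : finType) (q a : R) (G : {ffun I -> bool} -> R) :
  Ecoin q (fun c => a * G c) = a * Ecoin q G.
Proof. by rewrite /Ecoin mulr_sumr; apply: eq_bigr => c _; rewrite mulrCA. Qed.

Lemma Ecoin_prod (I : finType) (q : R) (f : I -> bool -> R) :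
  Ecoin q (fun c => \prod_i f i (c i)) = \prod_i (q * f i true + (1 - q) * f i false).
Proof.
transitivity (\prod_i \sum_(b : bool) ((if b then q else 1 - q) * f i b)); last first.
  by apply: eq_bigr => i _; rewrite big_bool.
rewrite bigA_distr_bigA; apply: eq_bigr => c _; by rewrite big_split.
Qed.

Lemma prod_delta (I : finType) (i : I) (a : I -> R) :
  \prod_l (if l == i then a l else 1) = a i.
Proof. by rewrite -big_mkcond big_pred1_eq. Qed.

Lemma Ecoin_x (I : finType) (q : R) (i : I) : Ecoin q (fun c => (c i)%:R) = q.
Proof.
pose f := fun (l : I) (b : bool) => if l == i then (b : nat)%:R else (1 : R).
transitivity (Ecoin q (fun c => \prod_l f l (c l))).
  by apply: Ecoin_ext => c; rewrite /f /= prod_delta.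
rewrite (Ecoin_prod q f) -[RHS](prod_delta i (fun=> q)); apply: eq_bigr => l _.
rewrite /f; case: (l == i) => /=; ring.
Qed.

Lemma Ecoin_xx (I : finType) (q : R) (i k : I) :
  Ecoin q (fun c => (c i)%:R * (c k)%:R) = q ^+ 2 + (q - q ^+ 2) * (i == k)%:R.
Proof.
have [<-|ik] := eqVneq i k.
  transitivity (Ecoin q (fun c => (c i)%:R)).
    by apply: Ecoin_ext => c; case: (c i); rewrite ?mulr1 ?mulr0.
  rewrite Ecoin_x /=; ring.
pose f := fun (l : I) (b : bool) =>
  (if l == i then (b : nat)%:R else (1 : R)) * (if l == k then (b : nat)%:R else (1 : R)).
transitivity (Ecoin q (fun c => \prod_l f l (c l))).
  by apply: Ecoin_ext => c; rewrite /f /= big_split /= !prod_delta.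
rewrite (Ecoin_prod q f) /= mulr0 addr0.
rewrite (_ : q ^+ 2 = \prod_l (if l == i then q else 1) * \prod_l (if l == k then q else 1)); last first.
  by rewrite (prod_delta i (fun=> q)) (prod_delta k (fun=> q)).
rewrite -big_split; apply: eq_bigr => l _ /=; rewrite /f /=.
have [->|li] := eqVneq l i.
  rewrite (negbTE ik); ring.

by have [_|_] := eqVneq l k; ring.
Qed.


Lemma Ecoin_axbx (I : finType) (q a b : R) (i k : I) :
  Ecoin q (fun c => a * (c i)%:R * (b * (c k)%:R)) =
  a * b * (q ^+ 2 + (q - q ^+ 2) * (i == k)%:R).
Proof. rewrite -Ecoin_xx -Ecoin_mull; apply: Ecoin_ext => c; ring. Qed.

Lemma sum_delta (I : finType) (i : I) (F : I -> R) :
  \sum_k F k * (i == k)%:R = F i.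
Proof.
rewrite (bigD1 i) //= eqxx mulr1 big1 ?addr0 // => k ki.
by rewrite eq_sym (negbTE ki) mulr0.
Qed.

Lemma sum_split_delta (I : finType) (a b : I -> R) (x y : R) :
  \sum_i \sum_k a i * b k * (x + y * (i == k)%:R) =
  x * ((\sum_i a i) * (\sum_k b k)) + y * \sum_i a i * b i.
Proof.
rewrite big_distrlr mulr_sumr mulr_sumr -big_split; apply: eq_bigr => i _ /=.
rewrite mulr_sumr.
transitivity (\sum_k (x * (a i * b k)) + \sum_k ((y * a i * b k) * (i == k)%:R)).
  rewrite -big_split; apply: eq_bigr => k _ /=; ring.
by rewrite sum_delta mulrA.
Qed.

Variable U : finType.

Definition Sv (I : finType) (j : I -> U) (c : {ffun I -> bool}) (v : U) : R :=
  \sum_i (j i == v)%:R * (c i)%:R.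

Lemma freqE (I : finType) (j : I -> U) v :
  (freq j v)%:R = \sum_i ((j i == v)%:R : R).
Proof.
rewrite /freq -sum1_card natr_sum big_mkcond /=; apply: eq_bigr => i _.
by rewrite unfold_in /in_set asboolb; case: eqP.
Qed.

Lemma ES1 (I : finType) (j : I -> U) (q : R) v :
  Ecoin q (fun c => Sv j c v) = q * (freq j v)%:R.
Proof.
rewrite /Sv Ecoin_sum; under eq_bigr do rewrite Ecoin_mull Ecoin_x.
by rewrite freqE mulr_sumr; apply: eq_bigr => i _; rewrite mulrC.
Qed.

Lemma ES2 (I : finType) (j : I -> U) (q : R) v w :
  Ecoin q (fun c => Sv j c v * Sv j c w) =
  q ^+ 2 * ((freq j v)%:R * (freq j w)%:R) + (q - q ^+ 2) * ((v == w)%:R * (freq j v)%:R).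
Proof.
rewrite /Sv; under Ecoin_ext => c do rewrite big_distrlr /=.
rewrite Ecoin_sum; under eq_bigr => i _ do rewrite Ecoin_sum.
under eq_bigr => i _ do under eq_bigr => k _ do rewrite Ecoin_axbx.
rewrite sum_split_delta !freqE; congr (_ + _ * _).
rewrite mulr_sumr; apply: eq_bigr => i _.
by have [->|_] := eqVneq (j i) v; rewrite ?mul1r ?mulr1 ?mul0r ?mulr0.
Qed.


Local Open Scope classical_set_scope.
Lemma int_step (p A B : R) : 0 < p -> p <= 1 ->
  Rintegral (@lebesgue_measure R) `[0%R, 1%R] (fun x => if x < p then A else B)
  = p * A + (1 - p) * B.
Proof.
move=> p0 p1.
have mf : measurable_fun (`[0%R, 1%R] : set R) (fun x : R => ((if x < p then A else B)%:E : \bar R)).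
  apply: measurable_funTS.
  have -> : (fun x : R => ((if x < p then A else B)%:E : \bar R)) = (fun x => if x < p then A%:E else B%:E).
    by apply/funext => x; case: ifP.
  apply: measurable_fun_ifT => //.
  exact: measurable_fun_ltr.
rewrite /Rintegral.
rewrite (@itv_bndbnd_setU _ _ _ (BLeft p)) ?bnd_simp ?p1 ?(ltW p0)//.
rewrite (@itv_bndbnd_setU _ _ _ (BLeft p)) ?bnd_simp ?p1 ?(ltW p0)// in mf.
rewrite integral_setU //; last first.
  apply/disj_setPS => x [] /=; rewrite !in_itv/= => /andP[_ h1] /andP[h2 _].
  by move: h1; rewrite ltNge h2.

rewrite [X in (X + _)%E](eq_integral (cst A%:E)); last first.
  by move=> x; rewrite inE/= in_itv/= => /andP[_ ->].
rewrite [X in (_ + X)%E](eq_integral (cst B%:E)); last first.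
  by move=> x; rewrite inE/= in_itv/= => /andP[h _]; rewrite ltNge h.
rewrite !integral_cst//.
rewrite [X in (_ * X + _)%E](_ : _ = (p - 0)%:E); last first.
  apply: (etrans (lebesgue_measure_itv _)) => /=; by rewrite lte_fin p0.
rewrite [X in (_ + _ * X)%E](_ : _ = (1 - p)%:E); last first.
  apply: (etrans (lebesgue_measure_itv _)) => /=.
  case: ltP => h; first by rewrite EFinB.
  have -> : p = 1 by apply/eqP; rewrite eq_le p1 -lee_fin.
  by rewrite subrr.
rewrite -!EFinM -EFinD /= subr0; ring.
Qed.

Local Close Scope classical_set_scope.

Lemma forall_upd (b : {ffun U -> bool}) (be : U -> bool) (v : U) (s : seq U) (t : bool) :
  v \notin s ->
  [forall w, (w \notin v :: s) ==> (b w == be w)] && (b v == t) =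
  [forall w, (w \notin s) ==> (b w == (if w == v then t else be w))].
Proof.
move=> vs; apply/idP/idP.
- case/andP => /forallP H /eqP bv; apply/forallP => w; apply/implyP => ws.
  have [->|wv] := eqVneq w v; first by rewrite bv.
  by move: (H w); rewrite in_cons negb_or wv ws implyTb.
- move/forallP => H; apply/andP; split.
  + apply/forallP => w; apply/implyP; rewrite in_cons negb_or => /andP[wv ws].
    by move: (H w); rewrite ws (negbTE wv) implyTb.
  + by move: (H v); rewrite vs eqxx implyTb.
Qed.

Lemma hash_iter (p : R) (p0 : 0 < p) (p1 : p <= 1) (s : seq U) : uniq s ->
  forall (h0 : U -> R) (G : (U -> bool) -> R),
  iter_unif s (fun h => G (fun v => h v < p)) h0 =
  \sum_(b : {ffun U -> bool} | [forall v, (v \notin s) ==> (b v == (h0 v < p))])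
     (\prod_(v <- s) (if b v then p else 1 - p)) * G b.
Proof.
elim: s => [|v s IH] /=.
  move=> _ h0 G; rewrite (big_pred1 [ffun v => h0 v < p]); last first.
    move=> b /=; apply/forallP/eqP => [H|->].
      by apply/ffunP => v; rewrite ffunE; exact/eqP/(H v).
    by move=> v; rewrite ffunE.
  rewrite big_nil mul1r; congr G; apply/funext => v; by rewrite ffunE.
case/andP => vs us h0 G.
set S := fun t : bool => \sum_(b : {ffun U -> bool} |
   [forall w, (w \notin s) ==> (b w == (if w == v then t else h0 w < p))])
   (\prod_(w <- s) (if b w then p else 1 - p)) * G b.
have E : forall x, iter_unif s (fun h => G (fun v => h v < p)) (upd h0 v x) =
    if x < p then S true else S false.
  move=> x; rewrite IH //; case: ifP => hx; apply: eq_bigl => b;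
  apply: eq_forallb => w; rewrite /upd; case: (w == v) => //; by rewrite hx.
transitivity (Rintegral (@lebesgue_measure R) `[0%R, 1%R]%classic
   (fun x => if x < p then S true else S false)).
  by congr Rintegral; apply/funext => x; exact: E.
rewrite int_step // (bigID (fun b : {ffun U -> bool} => b v)) /=.
congr (_ + _).
  rewrite /S mulr_sumr; apply: eq_big => b.
    by rewrite -(forall_upd b _ true vs) eqb_id.
  move=> /forallP/(_ v); rewrite vs eqxx implyTb eqb_id => bv.
  by rewrite big_cons bv mulrA.
rewrite /S mulr_sumr; apply: eq_big => b.
  by rewrite -(forall_upd b _ false vs) eqbF_neg.
move=> /forallP/(_ v); rewrite vs eqxx implyTb eqbF_neg => bv.
by rewrite big_cons (negbTE bv) mulrA.
Qed.

Lemma Ehash_coin (p : R) (G : (U -> bool) -> R) : 0 < p -> p <= 1 ->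
  Ehash (fun h => G (fun v => h v < p)) = Ecoin p (fun b => G b).
Proof.
move=> p0 p1; rewrite /Ehash hash_iter ?enum_uniq // /Ecoin.
apply: eq_big => [b|b _].
  by apply/forallP => v; rewrite mem_enum.
by rewrite big_enum.
Qed.


Lemma Ecoin_mulr (I : finType) (q a : R) (G : {ffun I -> bool} -> R) :
  Ecoin q (fun c => G c * a) = Ecoin q G * a.
Proof. by rewrite mulrC -Ecoin_mull; apply: Ecoin_ext => c; rewrite mulrC. Qed.

Lemma triple_sum (I1 I2 : finType) (a : R) (F : I1 -> R) (G : I2 -> R) :
  a * (\sum_i F i) * (\sum_k G k) = \sum_i \sum_k (a * F i * G k).
Proof.
rewrite -mulrA big_distrlr mulr_sumr; apply: eq_bigr => i _.
by rewrite mulr_sumr; apply: eq_bigr => k _; rewrite mulrA.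
Qed.

Lemma join_card (I1 I2 : finType) (j1 : I1 -> U) (j2 : I2 -> U) (p1 p2 : R)
  (h : U -> R) (c1 : {ffun I1 -> bool}) (c2 : {ffun I2 -> bool}) :
  (join_size j1 j2 (ubs j1 p1 h c1) (ubs j2 p2 h c2))%:R =
  \sum_v ((h v < Num.min p1 p2)%R : nat)%:R * Sv j1 c1 v * Sv j2 c2 v.
Proof.
pose G := fun i k => ((h (j1 i) < Num.min p1 p2)%R : nat)%:R * (c1 i)%:R * (c2 k)%:R
   * ((j1 i == j2 k) : nat)%:R : R.
transitivity (\sum_i \sum_k G i k).
  rewrite pair_bigA /join_size -sum1_card natr_sum big_mkcond /=.
  apply: eq_bigr => -[i k] _ /=; rewrite unfold_in /in_set asboolb /ubs !finset.inE /G /=.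
  have [e|ne] := eqVneq (j1 i) (j2 k).
    rewrite e lt_min.
    by case: (h (j2 k) < p1); case: (h (j2 k) < p2); case: (c1 i); case: (c2 k);
      rewrite /= ?mul1r ?mulr1 ?mul0r ?mulr0.
  by rewrite !andbF /= ?mulr0.
rewrite /Sv.
under [RHS]eq_bigr => v _ do rewrite triple_sum.
rewrite [RHS]exchange_big; apply: eq_bigr => i _ /=.
rewrite [RHS]exchange_big; apply: eq_bigr => k _ /=.
rewrite -[LHS](sum_delta (j1 i) (fun=> G i k)); apply: eq_bigr => v _.
rewrite /G; have [<-|ne] := eqVneq (j1 i) v; rewrite ?(eq_sym (j2 k)) /=; ring.
Qed.

End Coin.

Unset Implicit Arguments.

Theorem lemma1 (R : realType) (U I1 I2 : finType) (j1 : I1 -> U) (j2 : I2 -> U)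
    (p1 q1 p2 q2 : R)
    (hp1 : 0 < p1) (hp1' : p1 <= 1) (hq1 : 0 < q1) (hq1' : q1 <= 1)
    (hp2 : 0 < p2) (hp2' : p2 <= 1) (hq2 : 0 < q2) (hq2' : q2 <= 1) :
  let p := Num.min p1 p2 in
  Var q1 q2 (Jcount j1 j2 p1 q1 p2 q2) =
    (1 - p) / p * gamma R j1 j2 2 2
    + (1 - q2) / (p * q2) * gamma R j1 j2 2 1
    + (1 - q1) / (p * q1) * gamma R j1 j2 1 2
    + (1 - q1) * (1 - q2) / (p * q1 * q2) * gamma R j1 j2 1 1.
Proof.
move=> p.
have p0 : 0 < p by rewrite /p lt_min hp1 hp2.
have p1le : p <= 1 by rewrite /p ge_min hp1'.
have pn0 : p != 0 by rewrite (gt_eqF p0).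
have q1n0 : q1 != 0 by rewrite (gt_eqF hq1).
have q2n0 : q2 != 0 by rewrite (gt_eqF hq2).
pose a v := ((freq j1 v)%:R : R).
pose b v := ((freq j2 v)%:R : R).
set D := p * q1 * q2.
pose X := fun (be : U -> bool) (c1 : {ffun I1 -> bool}) (c2 : {ffun I2 -> bool}) =>
  \sum_v (be v : nat)%:R * Sv R j1 c1 v * Sv R j2 c2 v.
have hJ : Jcount j1 j2 p1 q1 p2 q2 = fun h c1 c2 => D^-1 * X (fun v => h v < p) c1 c2.
  apply/funext => h; apply/funext => c1; apply/funext => c2.
  by rewrite /Jcount join_card mulrC.
rewrite /Var /Expect hJ.
rewrite (Ehash_coin (fun be => Ecoin q1 (fun c1 => Ecoin q2 (fun c2 => (D^-1 * X be c1 c2) ^+ 2)))) //.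
rewrite (Ehash_coin (fun be => Ecoin q1 (fun c1 => Ecoin q2 (fun c2 => D^-1 * X be c1 c2)))) //.

have M1 : Ecoin p (fun be => Ecoin q1 (fun c1 => Ecoin q2 (fun c2 => D^-1 * X be c1 c2)))
    = D^-1 * \sum_v p * (q1 * a v) * (q2 * b v).
  have L0 : Ecoin p (fun be : {ffun U -> bool} =>
       D^-1 * \sum_v (be v : nat)%:R * (q1 * a v) * (q2 * b v))
      = D^-1 * \sum_v p * (q1 * a v) * (q2 * b v).
    rewrite Ecoin_mull Ecoin_sum; congr (_ * _); apply: eq_bigr => v _.
    by rewrite !Ecoin_mulr Ecoin_x.
  rewrite -L0; apply: Ecoin_ext => be.
  transitivity (Ecoin q1 (fun c1 => D^-1 * \sum_v (be v : nat)%:R * Sv R j1 c1 v * (q2 * b v))).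
    apply: Ecoin_ext => c1.
    rewrite Ecoin_mull /X Ecoin_sum; congr (_ * _); apply: eq_bigr => v _.
    by rewrite Ecoin_mull ES1.
  rewrite Ecoin_mull Ecoin_sum; congr (_ * _); apply: eq_bigr => v _.
  by rewrite Ecoin_mulr Ecoin_mull ES1.
pose E2 (q : R) (f : U -> R) v w := q ^+ 2 * (f v * f w) + (q - q ^+ 2) * ((v == w)%:R * f v).
have M2 : Ecoin p (fun be => Ecoin q1 (fun c1 => Ecoin q2 (fun c2 => (D^-1 * X be c1 c2) ^+ 2)))
    = D^-1 ^+ 2 * \sum_v \sum_w (p ^+ 2 + (p - p ^+ 2) * (v == w)%:R) * E2 q1 a v w * E2 q2 b v w.
  have L0 : Ecoin p (fun be : {ffun U -> bool} =>
       D^-1 ^+ 2 * \sum_v \sum_w ((be v : nat)%:R * (be w : nat)%:R) * E2 q1 a v w * E2 q2 b v w)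
      = D^-1 ^+ 2 * \sum_v \sum_w (p ^+ 2 + (p - p ^+ 2) * (v == w)%:R) * E2 q1 a v w * E2 q2 b v w.
    rewrite Ecoin_mull Ecoin_sum; congr (_ * _); apply: eq_bigr => v _.
    rewrite Ecoin_sum; apply: eq_bigr => w _.
    by rewrite !Ecoin_mulr Ecoin_xx.
  rewrite -L0; apply: Ecoin_ext => be.
  transitivity (Ecoin q1 (fun c1 => D^-1 ^+ 2 * \sum_v \sum_w ((be v : nat)%:R * (be w : nat)%:R)
       * (Sv R j1 c1 v * Sv R j1 c1 w) * E2 q2 b v w)).
    apply: Ecoin_ext => c1.
    transitivity (Ecoin q2 (fun c2 => D^-1 ^+ 2 * \sum_v \sum_w ((be v : nat)%:R * (be w : nat)%:R)
       * (Sv R j1 c1 v * Sv R j1 c1 w) * (Sv R j2 c2 v * Sv R j2 c2 w))).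
      apply: Ecoin_ext => c2; rewrite exprMn; congr (_ * _).
      rewrite expr2 /X big_distrlr; apply: eq_bigr => v _; apply: eq_bigr => w _ /=; ring.
    rewrite Ecoin_mull Ecoin_sum; congr (_ * _); apply: eq_bigr => v _.
    rewrite Ecoin_sum; apply: eq_bigr => w _.
    by rewrite Ecoin_mull ES2.
  rewrite Ecoin_mull Ecoin_sum; congr (_ * _); apply: eq_bigr => v _.
  rewrite Ecoin_sum; apply: eq_bigr => w _.
  by rewrite Ecoin_mulr Ecoin_mull ES2.
rewrite M1 M2.
pose Gv v := p * (q1 ^+ 2 * (a v * a v) + (q1 - q1 ^+ 2) * a v)
  * (q2 ^+ 2 * (b v * b v) + (q2 - q2 ^+ 2) * b v) - (p * (q1 * a v) * (q2 * b v)) ^+ 2.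
rewrite exprMn.
have -> : (\sum_v p * (q1 * a v) * (q2 * b v)) ^+ 2 =
    \sum_v \sum_w (p * (q1 * a v) * (q2 * b v)) * (p * (q1 * a w) * (q2 * b w)).
  by rewrite expr2 big_distrlr.
rewrite -mulrBr -sumrB.
rewrite (eq_bigr (fun v => Gv v)); last first.
  move=> v _; rewrite -sumrB -[RHS](sum_delta v (fun=> Gv v)); apply: eq_bigr => w _.
  rewrite /E2 /Gv; have [<-|ne] := eqVneq v w => /=; ring.
rewrite /gamma !mulr_sumr -!big_split /=; apply: eq_bigr => v _.
rewrite /Gv /a /b /D.
by field; rewrite q2n0 q1n0 pn0.
Qed.
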